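(* Let $B$ be a block of a graph $\mathcal{G}$. If every vertex of $B$ has finite degree and for each pair of vertices $(a,b)$ of $B$ there are only finitely many distinct simple paths in $\mathcal{G}$ joining $a$ to $b$, then $B$ is finite.
   Context: A vertex $a$ of a graph is a cutvertex if there are two other vertices in its connected component such that every path joining them passes through $a$. A block of a graph is a maximal connected subgraph that has no cutvertex. *)

(* Defs.v *)
(* graphs may be infinite, so we use an arbitrary vertex type
   with a (Prop-valued) adjacency relation. *)
From Stdlib Require Import List.
Import ListNotations.

Section Graphs.
Context {V : Type}.

Definition finite_pred {T : Type} (P : T -> Prop) : Prop :=
  exists l : list T, forall x, P x -> In x l.

Fixpoint chain (E : V -> V -> Prop) (p : list V) : Prop :=
  match p with
  | x :: ((y :: _) as q) => E x y /\ chain E q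
  | _ => True
  end.

Definition walk (S : V -> Prop) (E : V -> V -> Prop) (a b : V) (p : list V) : Prop :=
  hd_error p = Some a /\ last p a = b /\ Forall S p /\ chain E p.

Definition simple_path (S : V -> Prop) (E : V -> V -> Prop) (a b : V) (p : list V) : Prop :=
  walk S E a b p /\ NoDup p.

Definition is_subgraph (adj : V -> V -> Prop) (S : V -> Prop) (E : V -> V -> Prop) : Prop :=
  (forall x y, E x y -> S x /\ S y /\ adj x y) /\ (forall x y, E x y -> E y x).

Definition subgraph_le (S1 : V -> Prop) (E1 : V -> V -> Prop)
    (S2 : V -> Prop) (E2 : V -> V -> Prop) : Prop :=
  (forall x, S1 x -> S2 x) /\ (forall x y, E1 x y -> E2 x y).

Definition connected (S : V -> Prop) (E : V -> V -> Prop) : Prop :=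
  (exists x, S x) /\ forall x y, S x -> S y -> exists p, simple_path S E x y p.

(* a is a cutvertex of (S, E): there are two other vertices in its connected
   component such that every path joining them passes through a *)
Definition is_cutvertex (S : V -> Prop) (E : V -> V -> Prop) (a : V) : Prop :=
  S a /\ exists x y, x <> a /\ y <> a /\
    (exists p, simple_path S E a x p) /\ (exists p, simple_path S E a y p) /\
    forall p, simple_path S E x y p -> In a p.

Definition no_cutvertex (S : V -> Prop) (E : V -> V -> Prop) : Prop :=
  forall a, ~ is_cutvertex S E a.

Definition is_block (adj : V -> V -> Prop) (S : V -> Prop) (E : V -> V -> Prop) : Prop :=
  is_subgraph adj S E /\ connected S E /\ no_cutvertex S E /\
  forall S' E', is_subgraph adj S' E' -> connected S' E' -> no_cutvertex S' E' ->
    subgraph_le S E S' E' -> subgraph_le S' E' S E.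

End Graphs.

(* Main.v *)
Require Import Defs.
From Stdlib Require Import List Classical.
Import ListNotations.

Section L.
Context {V : Type}.

Lemma chain_app_iff (E : V -> V -> Prop) (l1 l2 : list V) (y : V) :
  chain E (l1 ++ y :: l2) <-> chain E (l1 ++ [y]) /\ chain E (y :: l2).
Proof.
  induction l1 as [|h t IH]; simpl.
  - tauto.
  - destruct t as [|h' t']; simpl in *.
    + tauto.
    + rewrite IH. tauto.
Qed.

Lemma chain_mono (E F : V -> V -> Prop) (H : forall x y, E x y -> F x y) l :
  chain E l -> chain F l.
Proof.
  induction l as [|h t IH]; simpl; auto.
  destruct t; auto. intros [H1 H2]; split; auto.
Qed.

Lemma chain_rev (E : V -> V -> Prop) (Hs : forall x y, E x y -> E y x) l :
  chain E l -> chain E (rev l).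
Proof.
  induction l as [|h t IH]; simpl; auto.
  destruct t as [|h' t']; simpl; auto.
  intros [H1 H2]. specialize (IH H2). simpl in IH.
  rewrite <- app_assoc. simpl. apply chain_app_iff. split; auto.
  simpl. auto.
Qed.

Lemma first_in (Q : V -> Prop) (P : list V) :
  (exists y, In y P /\ Q y) -> exists P1 x P2, P = P1 ++ x :: P2 /\ Q x /\
    forall y, In y P1 -> ~ Q y.
Proof.
  induction P as [|h t IH]; intros [y [Hy Hq]]; simpl in Hy; [contradiction|].
  destruct (classic (Q h)) as [Hh|Hh].
  - exists [], h, t. simpl. repeat split; auto.
  - destruct Hy as [<-|Hy]; [contradiction|].
    destruct IH as [P1 [x [P2 [-> [Hx Hn]]]]]; [eauto|].
    exists (h :: P1), x, P2. simpl. repeat split; auto.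
    intros z [<-|Hz]; auto.
Qed.

Lemma split2 (l : list V) x w : In x l -> In w l -> x <> w ->
  exists A M B, l = A ++ x :: M ++ w :: B \/ l = A ++ w :: M ++ x :: B.
Proof.
  induction l as [|h t IH]; simpl; [contradiction|].
  intros Hx Hw Hne.
  destruct (classic (h = x)) as [<-|Hhx].
  - destruct Hw as [<-|Hw]; [congruence|].
    apply in_split in Hw as [M [B ->]].
    exists [], M, B. left. reflexivity.
  - destruct (classic (h = w)) as [<-|Hhw].
    + destruct Hx as [<-|Hx]; [congruence|].
      apply in_split in Hx as [M [B ->]].
      exists [], M, B. right. reflexivity.
    + destruct Hx as [<-|Hx]; [congruence|].
      destruct Hw as [<-|Hw]; [congruence|].
      destruct (IH Hx Hw Hne) as [A [M [B [-> | ->]]]];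
        exists (h :: A), M, B; [left|right]; reflexivity.
Qed.

Lemma nodup_splice (L1 M L2 Q : list V) :
  NoDup (L1 ++ M ++ L2) -> NoDup Q -> (forall y, In y Q -> ~ In y (L1 ++ M ++ L2)) ->
  NoDup (L1 ++ Q ++ L2).
Proof.
  induction L1 as [|h t IH]; simpl; intros H1 H2 H3.
  - apply NoDup_app; auto.
    + apply NoDup_app_remove_l in H1. auto.
    + intros a Ha Hb. apply (H3 a Ha). apply in_or_app; auto.
  - inversion H1; subst. constructor.
    + intro Hin. apply in_app_or in Hin as [Hin|Hin]; [apply H4; apply in_or_app; auto|].
      apply in_app_or in Hin as [Hin|Hin].
      * apply (H3 h Hin). auto.
      * apply H4. apply in_or_app. right. apply in_or_app. auto.
    + apply IH; auto. intros y Hy Hn. apply (H3 y Hy). auto.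
Qed.

Lemma nodup_splice2 (A M B Q : list V) x w :
  NoDup (A ++ x :: M ++ w :: B) -> NoDup Q ->
  (forall y, In y Q -> ~ In y (A ++ x :: M ++ w :: B)) ->
  NoDup (A ++ x :: Q ++ w :: B).
Proof.
  intros H1 H2 H3.
  replace (A ++ x :: Q ++ w :: B) with ((A ++ [x]) ++ Q ++ (w :: B))
    by (rewrite <- app_assoc; reflexivity).
  replace (A ++ x :: M ++ w :: B) with ((A ++ [x]) ++ M ++ (w :: B)) in *
    by (rewrite <- app_assoc; reflexivity).
  apply nodup_splice with M; auto.
Qed.

Lemma chain_splice (E : V -> V -> Prop) (A M B Q : list V) x w :
  chain E (A ++ x :: M ++ w :: B) -> chain E (x :: Q ++ [w]) ->
  chain E (A ++ x :: Q ++ w :: B).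
Proof.
  intros H1 H2.
  apply chain_app_iff in H1 as [H1a H1b]. apply chain_app_iff. split; auto.
  change (chain E ((x :: M) ++ w :: B)) in H1b.
  apply chain_app_iff in H1b as [_ H1c].
  change (chain E ((x :: Q) ++ w :: B)). apply chain_app_iff. split; auto.
Qed.

Lemma in_splice (A M B Q : list V) x w y :
  In y (A ++ x :: Q ++ w :: B) -> In y (A ++ x :: M ++ w :: B) \/ In y Q.
Proof.
  intro H. repeat (rewrite in_app_iff in * || simpl in * ). tauto.
Qed.

Lemma hd_splice (A l1 l2 : list V) x :
  hd_error (A ++ x :: l1) = hd_error (A ++ x :: l2).
Proof. destruct A; reflexivity. Qed.

Lemma app_snoc (A Q B : list V) x w a :
  (A ++ x :: Q ++ w :: B) ++ [a] = A ++ x :: Q ++ w :: (B ++ [a]).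
Proof. rewrite <- app_assoc. simpl. rewrite <- app_assoc. reflexivity. Qed.

Lemma last_in (l : list V) d : l <> [] -> In (last l d) l.
Proof.
  intro H. destruct (exists_last H) as [l' [a ->]]. rewrite last_last.
  apply in_or_app. simpl; auto.
Qed.

Lemma finite_union (P : V -> list V -> Prop) (S : V -> Prop) (N : list V) :
  (forall u, In u N -> S u -> finite_pred (P u)) ->
  finite_pred (fun p => exists u, In u N /\ S u /\ P u p).
Proof.
  induction N as [|h t IH]; intros H.
  - exists []. intros x [u [[] _]].
  - destruct IH as [l Hl]. { intros u Hu. apply H. simpl; auto. }
    destruct (classic (S h)) as [Hh|Hh].
    + destruct (H h (or_introl eq_refl) Hh) as [l' Hl'].
      exists (l' ++ l). intros p [u [[<-|Hu] [Su Pu]]]; apply in_or_app; eauto 10.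
    + exists l. intros p [u [[<-|Hu] [Su Pu]]]; [contradiction|]. eauto 10.
Qed.
End L.

Section M.
Variables (V : Type) (adj : V -> V -> Prop)
  (adj_irr : forall x, ~ adj x x)
  (S : V -> Prop) (E : V -> V -> Prop)
  (HB : is_block adj S E).

Let Esym : forall x y, E x y -> E y x.
Proof. destruct HB as [[_ H] _]. exact H. Qed.
Let Eadj : forall x y, E x y -> S x /\ S y /\ adj x y.
Proof. destruct HB as [[H _] _]. exact H. Qed.
Let Hconn : connected S E.
Proof. destruct HB as [_ [H _]]. exact H. Qed.
Let Hnc : no_cutvertex S E.
Proof. destruct HB as [_ [_ [H _]]]. exact H. Qed.

Variable a : V.
Hypothesis Sa : S a.

Definition cycl (c : list V) := hd_error c = Some a /\ NoDup c /\ Forall S c /\ chain E (c ++ [a]).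
Definition good v := exists c, cycl c /\ In v c.

Lemma step w v : (w = a \/ good w) -> E w v -> S v -> v = a \/ good v.
Proof.
  intros Hw Ewv Sv.
  destruct (classic (v = a)) as [|Hva]; [left; auto|right].
  assert (Hbase : w = a -> good v).
  { intros ->. exists [a; v]. split; [|simpl; auto].
    repeat split; simpl; auto.
    - constructor; [simpl; intros [H|[]]; auto|]. constructor; auto. constructor.
  }
  destruct Hw as [Hw|[c [[Hhd [Hnd [HS Hch]]] Hwc]]]; [auto|].
  destruct (classic (w = a)) as [Hwa|Hwa]; [auto|].
  destruct (classic (In v c)) as [Hvc|Hvc]; [exists c; repeat split; auto|].
  assert (Sw : S w) by (rewrite Forall_forall in HS; auto).
  assert (Hvw : v <> w) by (intros ->; contradiction).
  assert (HP : exists P, simple_path S E v a P /\ ~ In w P).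
  { apply NNPP. intro Hn. apply (Hnc w). split; auto.
    exists v, a. repeat split; auto.
    - apply Hconn; auto.
    - apply Hconn; auto.
    - intros p Hp. apply NNPP. intro Hwp. apply Hn. eauto. }
  destruct HP as [P [[[PH [PL [PS PC]]] PN] HwP]].
  assert (Hac : In a c) by (destruct c; simpl in *; [discriminate|]; inversion Hhd; auto).
  assert (HaP : In a P).
  { rewrite <- PL. apply last_in. destruct P; discriminate. }
  destruct (first_in (fun y => In y c) P) as [P1 [x [P2 [HPe [Hxc HP1]]]]]; [eauto|].
  subst P.
  destruct P1 as [|v' P1'].
  { simpl in PH. inversion PH; subst. contradiction. }
  simpl in PH. inversion PH; subst v'.
  assert (Hxw : x <> w).
  { intros ->. apply HwP. apply in_or_app. simpl; auto. }
  assert (Hch1 : chain E ((v :: P1') ++ [x])).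
  { apply (proj1 (chain_app_iff E _ _ _ ) PC). }
  assert (Hnd1 : NoDup (v :: P1')) by (apply NoDup_app_remove_r in PN; auto).
  assert (HS1 : forall y, In y (v :: P1') -> S y).
  { intros y Hy. rewrite Forall_forall in PS. apply PS. apply in_or_app; auto. }
  destruct (split2 c x w Hxc Hwc Hxw) as [A [M [B [Hc|Hc]]]]; subst c.
  - exists (A ++ x :: rev (v :: P1') ++ w :: B). split.
    2:{ apply in_or_app. right. right. apply in_or_app. left. apply -> in_rev. simpl; auto. }
    split; [rewrite <- Hhd; apply hd_splice|].
    split.
    { apply nodup_splice2 with M; auto. apply NoDup_rev; auto.
      intros y Hy. apply HP1. apply in_rev. auto. }
    split.
    + rewrite Forall_forall in *. intros y Hy.
      destruct (in_splice _ M _ _ _ _ _ Hy) as [H|H]; auto. apply HS1. apply in_rev; auto.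
    + rewrite app_snoc. rewrite app_snoc in Hch. apply chain_splice with M; auto.
      simpl. rewrite <- app_assoc. simpl.
      change (chain E ((x :: rev P1') ++ v :: [w])). apply chain_app_iff. split.
      * apply chain_rev in Hch1; auto. rewrite rev_app_distr in Hch1. simpl in Hch1. exact Hch1.
      * simpl. auto.
  - exists (A ++ w :: (v :: P1') ++ x :: B). split.
    2:{ apply in_or_app. right. right. simpl; auto. }
    split; [rewrite <- Hhd; apply hd_splice|].
    split.
    { apply nodup_splice2 with M; auto. }
    split.
    + rewrite Forall_forall in *. intros y Hy.
      destruct (in_splice _ M _ _ _ _ _ Hy) as [H|H]; auto.
    + rewrite app_snoc. rewrite app_snoc in Hch. apply chain_splice with M; auto.
      simpl. split; auto.
Qed.

Lemma all_good : forall q, chain E (a :: q) -> Forall S (a :: q) ->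
  forall y, In y (a :: q) -> y = a \/ good y.
Proof.
  induction q as [|v q IH] using rev_ind; intros Hc HS y Hy.
  - simpl in Hy. destruct Hy as [<-|[]]; auto.
  - assert (Hne : a :: q <> []) by discriminate.
    destruct (exists_last Hne) as [l0 [w Hl0]].
    change (a :: q ++ [v]) with ((a :: q) ++ [v]) in *. rewrite Hl0 in *.
    rewrite <- app_assoc in Hc. simpl in Hc.
    apply chain_app_iff in Hc as [Hc1 Hc2]. simpl in Hc2.
    assert (HS' : Forall S (l0 ++ [w])).
    { rewrite Forall_forall in *. intros z Hz. apply HS. apply in_or_app; auto. }
    assert (IH' : forall y, In y (l0 ++ [w]) -> y = a \/ good y).
    { rewrite <- Hl0 in *. apply IH; auto. }
    apply in_app_or in Hy as [Hy|[<-|[]]]; auto.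
    apply step with w; [apply IH'; apply in_or_app; simpl; auto| tauto |].
    rewrite Forall_forall in HS. apply HS. apply in_or_app; simpl; auto.
Qed.

Lemma S_good v : S v -> v = a \/ good v.
Proof.
  intro Sv. destruct Hconn as [_ Hc]. destruct (Hc a v Sa Sv) as [q [[Hh [Hl [HS Hch]]] _]].
  destruct q as [|h q]; [discriminate|]. simpl in Hh. inversion Hh; subst h.
  apply all_good with q; auto. rewrite <- Hl. apply last_in. discriminate.
Qed.

Lemma good_path c : cycl c -> exists u, S u /\ adj a u /\
   simple_path (fun _ => True) adj a u c.
Proof.
  intros [Hh [Hnd [HS Hch]]].
  destruct c as [|a' r]; [discriminate|]. simpl in Hh. inversion Hh; subst a'.
  destruct r as [|h r'].
  { simpl in Hch. destruct Hch as [H _]. apply Eadj in H. destruct H as [_ [_ H]].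
    exfalso; eapply adj_irr; eauto. }
  assert (Hne : h :: r' <> []) by discriminate.
  destruct (exists_last Hne) as [l0 [u Hl0]]. rewrite Hl0 in *.
  replace ((a :: l0 ++ [u]) ++ [a]) with ((a :: l0) ++ u :: [a]) in Hch
    by (simpl; rewrite <- app_assoc; reflexivity).
  pose proof Hch as Hch'.
  apply chain_app_iff in Hch as [Hc1 Hc2]. simpl in Hc2.
  destruct Hc2 as [Eua _]. pose proof (Eadj _ _ Eua) as [Su [_ Aua]].
  exists u. split; [auto|]. split.
  - apply (Eadj _ _ (Esym _ _ Eua)).
  - split; [|exact Hnd]. split; [reflexivity|]. split.
    + change (a :: l0 ++ [u]) with ((a :: l0) ++ [u]). apply last_last.
    + split. { rewrite Forall_forall; auto. }
      apply chain_mono with E; [intros x y H; apply (Eadj _ _ H)|exact Hc1].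
Qed.

Lemma finite_S (N : list V) (HN : forall u, adj a u -> In u N)
  (Hpaths : forall a b, S a -> S b ->
     finite_pred (fun p => simple_path (fun _ => True) adj a b p)) :
  finite_pred S.
Proof.
  destruct (finite_union (fun u p => simple_path (fun _ => True) adj a u p) S N)
    as [L HL].
  { intros u _ Su. apply Hpaths; auto. }
  exists (a :: concat L). intros v Sv.
  destruct (S_good v Sv) as [->|[c [Hc Hv]]]; [simpl; auto|].
  right. apply in_concat. exists c. split; auto.
  apply HL. destruct (good_path c Hc) as [u [Su [Hau Hp]]]. eauto.
Qed.
End M.

Theorem mainTheorem8 (V : Type) (adj : V -> V -> Prop)
  (adj_sym : forall x y, adj x y -> adj y x)
  (adj_irr : forall x, ~ adj x x)
  (S : V -> Prop) (E : V -> V -> Prop)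
  (HB : is_block adj S E)
  (Hdeg : forall v, S v -> finite_pred (adj v))
  (Hpaths : forall a b, S a -> S b ->
     finite_pred (fun p => simple_path (fun _ => True) adj a b p)) :
  finite_pred S.
Proof.
  pose proof HB as [Hs [[[a Sa] Hc] Hr]].
  destruct (Hdeg a Sa) as [N HN].
  apply (finite_S V adj adj_irr S E HB a Sa N HN Hpaths).
Qed.
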